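(* Let $\lambda>0$, $L>0$, $1\le m\le d$, and let $\boldsymbol{x}_1,\ldots,\boldsymbol{x}_t\in\mathbb{R}^d$ satisfy $\|\boldsymbol{x}_s\|\le L$. With $\boldsymbol{V}_t=\boldsymbol{X}_t^\top\boldsymbol{X}_t+\lambda\boldsymbol{I}$ and $\bar\rho_t$ from the FD sketch of size $m$ of $\boldsymbol{x}_1,\ldots,\boldsymbol{x}_t$, $$\ln\frac{\det(\boldsymbol{V}_t)}{\det(\lambda\boldsymbol{I})}\le d\ln\Big(1+\frac{\bar\rho_t}{\lambda}\Big)+m\ln\Big(1+\frac{tL^2}{m\lambda}\Big).$$
   Context: $\boldsymbol{X}_t$ is the $t\times d$ matrix with rows $\boldsymbol{x}_1^\top,\ldots,\boldsymbol{x}_t^\top$. Frequent Directions (FD) sketch of size $m$ ($1\le m\le d$) of a sequence $\boldsymbol{x}_1,\boldsymbol{x}_2,\ldots\in\mathbb{R}^d$: set $\boldsymbol{S}_0=\boldsymbol{0}\in\mathbb{R}^{m\times d}$. For $s\ge1$ let $\boldsymbol{A}_s=\boldsymbol{S}_{s-1}^\top\boldsymbol{S}_{s-1}+\boldsymbol{x}_s\boldsymbol{x}_s^\top$, let $\sigma_1\ge\cdots\ge\sigma_d\ge0$ be its eigenvalues with orthonormal eigenvectors $\boldsymbol{u}_1,\ldots,\boldsymbol{u}_d$, set $\rho_s=\sigma_m$, and let $\boldsymbol{S}_s\in\mathbb{R}^{m\times d}$ have $i$-th row $\sqrt{\sigma_i-\rho_s}\,\boldsymbol{u}_i^\top$ ($i=1,\ldots,m$).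 Define $\bar\rho_t=\rho_1+\cdots+\rho_t$ ($\bar\rho_0=0$). *)

(* Defs.v *)
From HB Require Import structures.
From mathcomp Require Import all_boot all_order all_algebra.
Set Implicit Arguments. Unset Strict Implicit. Unset Printing Implicit Defensive.
Import Order.TTheory GRing.Theory Num.Theory.
Local Open Scope ring_scope.

(* Given S_{s-1} = Sprev and x_s = x, with A_s = Sprev^T Sprev + x^T x:
   sigma 0 >= ... >= sigma (d-1) are the eigenvalues of A_s with orthonormal
   eigenvectors u 0, ..., u (d-1) (row vectors; indices are 0-based, so the
   paper's sigma_i, u_i are sigma (i-1), u (i-1)); rho = sigma_m (paper) =
   sigma m.-1 (here); and the i-th row of Snew is sqrt(sigma_i - rho) u_i^T. *)
Definition FD_step (R : rcfType) (m d : nat) (Sprev : 'M[R]_(m, d))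
    (x : 'rV[R]_d) (rho : R) (Snew : 'M[R]_(m, d)) : Prop :=
  let A := Sprev^T *m Sprev + x^T *m x in
  exists (sigma : nat -> R) (u : nat -> 'rV[R]_d),
    (forall i j, (i < d)%N -> (j < d)%N -> u i *m (u j)^T = (i == j)%:R%:M) /\
    (forall i, (i < d)%N -> u i *m A = sigma i *: u i) /\
    (forall i j, (i <= j)%N -> (j < d)%N -> sigma j <= sigma i) /\
    rho = sigma m.-1 /\
    Snew = \matrix_(i < m, j < d) (Num.sqrt (sigma i - rho) * u i 0 j).

Definition vnorm (R : rcfType) (d : nat) (v : 'rV[R]_d) : R :=
  Num.sqrt (\sum_(j < d) v 0 j ^+ 2).

(* Main.v *)
Require Import Defs.
From HB Require Import structures.
From mathcomp Require Import all_boot all_order all_algebra.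
From mathcomp Require Import lra.
Import Order.TTheory GRing.Theory Num.Theory.
Local Open Scope ring_scope.
Set Implicit Arguments. Unset Strict Implicit. Unset Printing Implicit Defensive.

Section Aux.
Variable R : rcfType.

Lemma det_rank1 (d : nat) (C : 'M[R]_(d,1)) (Rw : 'M[R]_(1,d)) :
  \det (1%:M + C *m Rw) = 1 + (Rw *m C) 0 0.
Proof.
have E1 : block_mx (1%:M + C *m Rw) (-C) 0 1%:M *m block_mx 1%:M 0 Rw 1%:M
          = block_mx 1%:M 0 Rw 1%:M *m block_mx 1%:M (-C) 0 (1%:M + Rw *m C).
  rewrite !mulmx_block !mul1mx !mulmx1 !mul0mx !mulmx0 !add0r !addr0.
  by rewrite mulNmx addrK mulmxN (addrC 1%:M) addKr.
have := congr1 determinant E1.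
rewrite !det_mulmx !det_ublock !det_lblock !det1 !mulr1 !mul1r.
by move=> ->; rewrite det_mx11 !mxE eqxx.
Qed.

Definition PDs (d : nat) (V : 'M[R]_d) :=
  V^T = V /\ forall w : 'rV[R]_d, w != 0 -> 0 < (w *m V *m w^T) 0 0.

Lemma quad11 (d : nat) (w v : 'rV[R]_d) :
  (w *m (v^T *m v) *m w^T) 0 0 = ((w *m v^T) 0 0) ^+ 2.
Proof.
rewrite !mulmxA -(mulmxA _ v) [in LHS]mxE big_ord1 expr2; congr (_ * _). 
by rewrite -[v *m w^T]trmxK trmx_mul trmxK mxE.
Qed.

Lemma rank1_step (d : nat) (V : 'M[R]_d) (v : 'rV[R]_d) :
  PDs V -> 0 < \det V -> PDs (V + v^T *m v) /\ \det V <= \det (V + v^T *m v).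
Proof.
move=> [Vs Vp] dp.
have Vu : V \in unitmx by rewrite unitmxE unitfE gt_eqF.
split.
  split; first by rewrite raddfD /= Vs trmx_mul trmxK.
  move=> w w0; rewrite mulmxDr mulmxDl mxE quad11.
  by apply: ltr_wpDr; [exact: sqr_ge0 | exact: Vp].
have -> : V + v^T *m v = V *m (1%:M + (invmx V *m v^T) *m v).
  by rewrite mulmxDr mulmx1 !mulmxA mulmxV // mul1mx.
rewrite det_mulmx det_rank1 -[X in X <= _]mulr1; apply: ler_wpM2l; first exact: ltW.
rewrite lerDl.
have [->|v0] := eqVneq v 0; first by rewrite mul0mx mxE.
have w0 : v *m invmx V != 0.
  apply: contraNneq v0 => h; by rewrite -(mulmxKV Vu v) h mul0mx.
have := Vp _ w0; rewrite mulmxKV // trmx_mul trmx_inv Vs mulmxA.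
exact: ltW.
Qed.

Definition sos (d : nat) (D : 'M[R]_d) :=
  exists s : seq 'rV[R]_d, D = \sum_(v <- s) v^T *m v.

Lemma sos_seq (d : nat) (s : seq 'rV[R]_d) (V : 'M[R]_d) :
  PDs V -> 0 < \det V ->
  PDs (V + \sum_(v <- s) v^T *m v) /\ \det V <= \det (V + \sum_(v <- s) v^T *m v).
Proof.
elim: s V => [|v s IH] V PV dV; first by rewrite big_nil addr0.
rewrite big_cons addrA; have [P1 d1] := rank1_step v PV dV.
have [P2 d2] := IH _ P1 (lt_le_trans dV d1).
by split => //; apply: le_trans d2.
Qed.

Lemma sos_mono (d : nat) (V D : 'M[R]_d) :
  sos D -> PDs V -> 0 < \det V -> PDs (V + D) /\ \det V <= \det (V + D).
Proof. by move=> [s ->]; apply: sos_seq. Qed.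

Lemma sos0 (d : nat) : sos (0 : 'M[R]_d).
Proof. by exists [::]; rewrite big_nil. Qed.

Lemma sosD (d : nat) (A B : 'M[R]_d) : sos A -> sos B -> sos (A + B).
Proof. by move=> [s ->] [r ->]; exists (s ++ r); rewrite big_cat. Qed.

Lemma sos_big (d : nat) (I : Type) (r : seq I) (P : pred I) (F : I -> 'M[R]_d) :
  (forall i, P i -> sos (F i)) -> sos (\sum_(i <- r | P i) F i).
Proof. by move=> H; apply: big_ind => //; [exact: sos0 | exact: sosD]. Qed.

Lemma sosZ (d : nat) (a : R) (v : 'rV[R]_d) : 0 <= a -> sos (a *: (v^T *m v)).
Proof.
move=> a0; exists [:: Num.sqrt a *: v]; rewrite big_seq1.
by rewrite linearZ /= [(_ *: v)^T]linearZ /= -scalemxAl scalerA -expr2 sqr_sqrtr.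
Qed.

Lemma colrow (n d : nat) (A B : 'M[R]_(n, d)) :
  A^T *m B = \sum_(i < n) (row i A)^T *m row i B.
Proof.
apply/matrixP => a b; rewrite !mxE summxE; apply: eq_bigr => i _.
by rewrite !mxE big_ord1 !mxE.
Qed.

Section Ortho.
Variables (d : nat) (u : nat -> 'rV[R]_d).
Hypothesis orth : forall i j, (i < d)%N -> (j < d)%N -> u i *m (u j)^T = (i == j)%:R%:M.
Let U : 'M[R]_d := \matrix_(i < d) u i.

Lemma UUt : U *m U^T = 1%:M.
Proof.
apply/matrixP => a b.
have := congr1 (fun M : 'M_1 => M 0 0) (orth (ltn_ord a) (ltn_ord b)).
rewrite /= [in RHS]mxE eqxx mulr1n => H.
rewrite [RHS]mxE -[a == b]/(val a == val b) -H !mxE; apply: eq_bigr => k _.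
by rewrite !mxE.
Qed.

Lemma UtU : U^T *m U = 1%:M.
Proof. exact: mulmx1C UUt. Qed.

Lemma detU2 : \det U ^+ 2 = 1.
Proof. by rewrite expr2 -{2}det_tr -det_mulmx UUt det1. Qed.

Lemma rowDU (e : 'I_d -> R) (i : 'I_d) :
  row i (diag_mx (\row_j e j) *m U) = e i *: u i.
Proof. by apply/rowP => j; rewrite mul_diag_mx !mxE. Qed.

Lemma spec_eq (e : 'I_d -> R) :
  \sum_(i < d) e i *: ((u i)^T *m u i) = U^T *m (diag_mx (\row_j e j) *m U).
Proof.
rewrite colrow; apply: eq_bigr => i _.
by rewrite rowDU rowK scalemxAr.
Qed.

Lemma det_spec (e : 'I_d -> R) :
  \det (\sum_(i < d) e i *: ((u i)^T *m u i)) = \prod_(i < d) e i.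
Proof.
rewrite spec_eq !det_mulmx det_tr det_diag mulrCA -expr2 detU2 mulr1.
by apply: eq_bigr => i _; rewrite mxE.
Qed.

Lemma sum_uu : \sum_(i < d) (u i)^T *m u i = 1%:M.
Proof.
rewrite -UtU colrow; apply: eq_bigr => i _; by rewrite rowK.
Qed.

Lemma eig_decomp (A : 'M[R]_d) (sigma : nat -> R) :
  (forall i, (i < d)%N -> u i *m A = sigma i *: u i) ->
  A = \sum_(i < d) sigma i *: ((u i)^T *m u i).
Proof.
move=> Heig; rewrite spec_eq -[LHS]mul1mx -UtU -mulmxA; congr (_ *m _).
apply/row_matrixP => i; rewrite rowDU row_mul rowK; exact: Heig.
Qed.

Lemma tr_uu i : (i < d)%N -> \tr ((u i)^T *m u i) = 1.
Proof. by move=> id; rewrite mxtrace_mulC orth // eqxx mxtrace1. Qed.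

End Ortho.

Lemma card_lt (d m : nat) : (m <= d)%N -> #|[pred i : 'I_d | (i < m)%N]| = m.
Proof.
move=> md; rewrite -sum1_card.
rewrite -(big_ord_widen d (fun _ => 1%N) md) /=.
by rewrite sum1_card card_ord.
Qed.

Lemma num_ineq (d m : nat) (lam c : R) (b : 'I_d -> R) :
  0 < lam -> lam <= c -> (m <= d)%N -> (0 < m)%N ->
  (forall i, 0 <= b i) -> (forall i : 'I_d, (m <= i)%N -> b i = 0) ->
  \prod_i (c + b i) <= c ^+ d * (1 + (\sum_i b i) / (m%:R * lam)) ^+ m.
Proof.
move=> l0 lc md m0 b0 bm.
have c0 : 0 < c by apply: lt_le_trans lc.
pose A := [pred i : 'I_d | (i < m)%N].
have cA : #|A| = m by exact: card_lt.
apply: le_trans (_ : \prod_i (c * (1 + b i / lam)) <= _).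
  apply: ler_prod => i _; apply/andP; split; first by rewrite addr_ge0 // ltW.
  rewrite mulrDr mulr1 lerD2l mulrCA ler_peMr //.
    by rewrite ler_pdivlMr // mul1r.
rewrite prodrMl card_ord; apply: ler_wpM2l; first by rewrite exprn_ge0 // ltW.
rewrite [\prod_i _](bigID A) /= [X in _ * X]big1 ?mulr1; last first.
  by move=> i; rewrite -leqNgt => /bm ->; rewrite mul0r addr0.
have -> : \sum_i b i = \sum_(i in A) b i.
  rewrite [LHS](bigID A) /= [X in _ + X]big1 ?addr0 //.
  by move=> i; rewrite -leqNgt => /bm.
have := leif_AGM (A := A) (E := fun i => 1 + b i / lam).
rewrite cA => H; apply: le_trans (leif_le (H _)) _.
  by move=> i _; rewrite addr_ge0 // divr_ge0 // ltW.
apply: lerXn2r; rewrite ?nnegrE.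
- by rewrite divr_ge0 // sumr_ge0 // => i _; rewrite addr_ge0 // divr_ge0 // ltW.
- by rewrite addr_ge0 // divr_ge0 ?sumr_ge0 // mulr_ge0 // ltW.
rewrite big_split /= sumr_const cA -mulr_suml.
have m0' : m%:R != 0 :> R by rewrite pnatr_eq0 -lt0n.
rewrite mulrDl divff // lerD2l.
by rewrite invfM mulrA [X in X <= _]mulrAC.
Qed.

Lemma psd_quad (k d : nat) (M : 'M[R]_(k, d)) (w : 'rV[R]_d) :
  0 <= (w *m (M^T *m M) *m w^T) 0 0.
Proof.
rewrite !mulmxA -(mulmxA _ M) -[w *m M^T]trmxK trmx_mul trmxK mxE.
by apply: sumr_ge0 => j _; rewrite mxE -expr2 sqr_ge0.
Qed.

Lemma step_facts (d m : nat) (Sp Sn : 'M[R]_(m, d)) (x : 'rV[R]_d) (rho : R) :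
  (1 <= m)%N -> (m <= d)%N -> FD_step Sp x rho Sn ->
  [/\ 0 <= rho,
      \tr (Sn^T *m Sn) <= \tr (Sp^T *m Sp) + \tr (x^T *m x),
      sos (rho%:M - (Sp^T *m Sp + x^T *m x) + Sn^T *m Sn)
    & forall lam c, 0 < lam -> lam <= c ->
      \det (Sn^T *m Sn + c%:M) <= c ^+ d * (1 + \tr (Sn^T *m Sn) / (m%:R * lam)) ^+ m].
Proof.
move=> m1 md [sigma [u [orth [eig [mono [rhoE SnE]]]]]].
set A := Sp^T *m Sp + x^T *m x in eig *.
pose X i := (u i)^T *m u i.
have Adec : A = \sum_(i < d) sigma i *: X i := eig_decomp orth eig.
have sig0 i : (i < d)%N -> 0 <= sigma i.
  move=> id; have := congr1 (fun M => (M *m (u i)^T) 0 0) (eig i id).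
  rewrite /= -scalemxAl orth // eqxx => H.
  rewrite [sigma i](_ : _ = (u i *m A *m (u i)^T) 0 0); last first.
    by rewrite H !mxE eqxx mulr1.
  by rewrite /A mulmxDr mulmxDl mxE addr_ge0 // psd_quad.
have md1 : (m.-1 < d)%N by rewrite (leq_trans _ md) // prednK.
have rho0 : 0 <= rho by rewrite rhoE sig0.
have monoL i : (i < m)%N -> rho <= sigma i.
  move=> im; rewrite rhoE mono //; by rewrite -ltnS prednK.
have monoR i : (m <= i)%N -> (i < d)%N -> sigma i <= rho.
  move=> mi id; rewrite rhoE mono //; by rewrite (leq_trans _ mi) // leq_pred.
pose b (i : 'I_d) := if (i < m)%N then sigma i - rho else 0.
have b0 i : 0 <= b i.
  by rewrite /b; case: ifP => // /monoL; rewrite subr_ge0.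
have SnS : Sn^T *m Sn = \sum_(i < d) b i *: X i.
  rewrite colrow.
  have -> : \sum_(i < m) (row i Sn)^T *m row i Sn = \sum_(i < m) (sigma i - rho) *: X i.
    apply: eq_bigr => i _.
    have -> : row i Sn = Num.sqrt (sigma i - rho) *: u i.
      by apply/rowP => j; rewrite SnE !mxE.
    rewrite linearZ /= [(_ *: u i)^T]linearZ /= -scalemxAl scalerA -expr2 sqr_sqrtr //.
    by rewrite subr_ge0 monoL.
  rewrite (big_ord_widen d (fun i => (sigma i - rho) *: X i) md) big_mkcond /=.
  by apply: eq_bigr => i _; rewrite /b; case: ifP => //; rewrite scale0r.
have trC (c : 'I_d -> R) : \tr (\sum_(i < d) c i *: X i) = \sum_(i < d) c i.
  rewrite raddf_sum; apply: eq_bigr => i _.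
  by rewrite /= mxtraceZ tr_uu // mulr1.
have sX : \sum_(i < d) X i = 1%:M := sum_uu orth.
have scal (c : R) : c%:M = \sum_(i < d) c *: X i.
  by rewrite -scaler_sumr sX scalemx1.
split => //.
- rewrite -mxtraceD -/A Adec SnS !trC; apply: ler_sum => i _.
  rewrite /b; case: ifP => _; last exact: sig0.
  by rewrite lerBlDr lerDl.
- have -> : rho%:M - A + Sn^T *m Sn
      = \sum_(i < d) (rho - sigma i + b i) *: X i.
    rewrite Adec SnS scal -sumrB -big_split /=; apply: eq_bigr => i _.
    by rewrite scalerDl scalerBl.
  apply: sos_big => i _; apply: sosZ.
  rewrite /b; case: ifP => im; first by rewrite addrA subrK subrr.
  by rewrite addr0 subr_ge0 monoR // leqNgt im.
- move=> lam c l0 lc.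
  have -> : Sn^T *m Sn + c%:M = \sum_(i < d) (c + b i) *: X i.
    by rewrite SnS scal -big_split /=; apply: eq_bigr => i _; rewrite scalerDl addrC.
  rewrite det_spec // SnS trC; apply: num_ineq => // i.
  by rewrite /b leqNgt => /negbTE ->.
Qed.

Lemma sos1 (d : nat) (v : 'rV[R]_d) : sos (v^T *m v).
Proof. by exists [:: v]; rewrite big_seq1. Qed.

Lemma PDs_scalar (d : nat) (lam : R) : 0 < lam -> PDs (lam%:M : 'M[R]_d).
Proof.
move=> l0; split; first exact: tr_scalar_mx.
move=> w w0; rewrite mul_mx_scalar -scalemxAl mxE pmulr_rgt0 //.
rewrite mxE lt_def; apply/andP; split; last first.
  by apply: sumr_ge0 => j _; rewrite mxE -expr2 sqr_ge0.
apply: contra w0 => /eqP H; apply/eqP/rowP => j.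
have hw i : true -> 0 <= w 0 i * w^T i 0 by rewrite mxE -expr2 sqr_ge0.
have := psumr_eq0P hw H isT (i := j).
rewrite mxE -expr2 => /eqP; rewrite sqrf_eq0 => /eqP ->; by rewrite mxE.
Qed.

Lemma mx_alg (d : nat) (a b g q q' r Rr : 'M[R]_d) :
  a + g = q + Rr -> (a + b) + (g + (r - (q + b) + q')) = q' + (Rr + r).
Proof.
move=> /matrixP H; apply/matrixP => i j; move: (H i j); rewrite !mxE => H'.
lra.
Qed.

Lemma tr_xx (d : nat) (x : 'rV[R]_d) : \tr (x^T *m x) = vnorm x ^+ 2.
Proof.
rewrite mxtrace_mulC /vnorm sqr_sqrtr; last first.
  by apply: sumr_ge0 => j _; rewrite sqr_ge0.
rewrite /mxtrace big_ord1 mxE; apply: eq_bigr => j _; by rewrite mxE expr2.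
Qed.

Lemma mx_alg2 (d : nat) (a g q Lm Rr : 'M[R]_d) :
  a + g = q + Rr -> (a + Lm) + g = q + (Lm + Rr).
Proof.
move=> /matrixP H; apply/matrixP => i j; move: (H i j); rewrite !mxE => H'.
lra.
Qed.
End Aux.

Unset Implicit Arguments.

Theorem mainTheorem3 (R : rcfType) (d m t : nat) (lam L : R)
    (x : nat -> 'rV[R]_d) (S : nat -> 'M[R]_(m, d)) (rho : nat -> R) :
  0 < lam -> 0 < L -> (1 <= m)%N -> (m <= d)%N ->
  (forall s, (1 <= s <= t)%N -> vnorm (x s) <= L) ->
  S 0%N = 0 ->
  (forall s, (1 <= s <= t)%N -> FD_step (S s.-1) (x s) (rho s) (S s)) ->
  \det (\sum_(1 <= s < t.+1) (x s)^T *m x s + lam%:M) / \det (lam%:M : 'M[R]_d)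
    <= (1 + (\sum_(1 <= s < t.+1) rho s) / lam) ^+ d
       * (1 + t%:R * L ^+ 2 / (m%:R * lam)) ^+ m.
Proof.
move=> l0 L0 m1 md xL S0 step.
have dl : \det (lam%:M : 'M[R]_d) = lam ^+ d by rewrite det_scalar.
have dl0 : 0 < lam ^+ d by rewrite exprn_gt0.
have [t0|tpos] := posnP t.
  rewrite t0 !big_geq // add0r divff ?dl ?gt_eqF //.
  by rewrite mul0r addr0 expr1n mul0r mul0r addr0 expr1n mulr1.
pose Q n := (S n)^T *m S n.
pose Y s := (rho s)%:M - (Q s.-1 + (x s)^T *m x s) + Q s.
set rb := \sum_(1 <= s < t.+1) rho s.
set Vt := \sum_(1 <= s < t.+1) (x s)^T *m x s + lam%:M.
have rho0 s : (1 <= s <= t)%N -> 0 <= rho s.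
  by move=> hs; case: (step_facts m1 md (step s hs)).
have rb0 : 0 <= rb.
  rewrite /rb big_seq; apply: sumr_ge0 => s; rewrite mem_index_iota ltnS; exact: rho0.
have [PV dV] : PDs Vt /\ \det (lam%:M : 'M[R]_d) <= \det Vt.
  rewrite /Vt addrC; apply: sos_mono.
  - by apply: sos_big => s _; exact: sos1.
  - exact: PDs_scalar.
  - by rewrite dl.
have dV0 : 0 < \det Vt by rewrite (lt_le_trans _ dV) // dl.
have ident n : \sum_(1 <= s < n.+1) (x s)^T *m x s + \sum_(1 <= s < n.+1) Y s
    = Q n + (\sum_(1 <= s < n.+1) rho s)%:M.
  elim: n => [|n IH].
    by rewrite !big_geq // /Q S0 mulmx0 addr0 raddf0 addr0.
  rewrite [\sum_(1 <= s < n.+2) (x s)^T *m x s]big_nat_recr //=.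
  rewrite [\sum_(1 <= s < n.+2) Y s]big_nat_recr //=.
  rewrite [\sum_(1 <= s < n.+2) rho s]big_nat_recr //= raddfD /=; exact: mx_alg.
have WE : Vt + \sum_(1 <= s < t.+1) Y s = Q t + (lam + rb)%:M.
  rewrite /Vt raddfD /=; apply: mx_alg2; exact: ident.
have G_sos : sos (\sum_(1 <= s < t.+1) Y s).
  rewrite big_seq; apply: sos_big => s; rewrite mem_index_iota ltnS => hs.
  by case: (step_facts m1 md (step s hs)).
have [_ dW] := sos_mono G_sos PV dV0.
rewrite WE in dW.
have trQ n : (n <= t)%N -> \tr (Q n) <= n%:R * L ^+ 2.
  elim: n => [|n IH] hn; first by rewrite /Q S0 mulmx0 mxtrace0 mul0r.
  have hs : (1 <= n.+1 <= t)%N by rewrite hn.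
  have [_ h2 _ _] := step_facts m1 md (step n.+1 hs).
  apply: le_trans h2 _; rewrite mulrS mulrDl mul1r [X in _ <= X]addrC.
  apply: lerD; first exact: IH (ltnW hn).
  rewrite tr_xx; apply: lerXn2r; rewrite ?nnegrE ?sqrtr_ge0 ?(ltW L0) //.
  exact: xL.
have [_ _ _ h4] := step_facts m1 md (step t (andb_true_intro (conj tpos (leqnn t)))).
have dW2 := h4 lam (lam + rb) l0 (ltac:(by rewrite lerDl)).
rewrite dl ler_pdivrMr //.
apply: le_trans dW _; apply: le_trans dW2 _.
rewrite mulrAC -exprMn mulrDl mul1r divfK ?gt_eqF //.
apply: ler_wpM2l; first by rewrite exprn_ge0 // addr_ge0 // ltW.
apply: lerXn2r; rewrite ?nnegrE.
- have trS : 0 <= \tr ((S t)^T *m S t).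
    rewrite /mxtrace; apply: sumr_ge0 => i _; rewrite mxE; apply: sumr_ge0 => k _.
    by rewrite mxE -expr2 sqr_ge0.
  by rewrite addr_ge0 // divr_ge0 // mulr_ge0 // ltW.
- apply: addr_ge0 => //; apply: divr_ge0; first by apply: mulr_ge0; [exact: ler0n | exact: sqr_ge0].
  by apply: mulr_ge0; [exact: ler0n | exact: ltW].
rewrite lerD2l ler_pM2r ?invr_gt0 ?mulr_gt0 ?ltr0n //.
exact: trQ.
Qed.
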